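(* Let $x,y\in V(D^+)$ with $y\prec x$. Then either $I_s(x)\preceq y$ or $y\prec I_s(x)$. Similarly, either $I_t(y)\preceq x$ or $x\prec I_t(y)$.
   Context: $G=(V,E,w)$ is a simple, connected, undirected graph with positive edge lengths, $s,t\in V$, and $d(\cdot,\cdot)$ is the shortest path distance in $G$; $d_s(v)=d(s,v)$, $d_t(v)=d(v,t)$. $D$ is the union of all shortest $st$-paths of $G$, and $D^+$ is the directed acyclic graph obtained from $D$ by orienting every edge toward $t$ (edge $\{u,v\}$ becomes $(u,v)$ when $d_s(v)=d_s(u)+w(u,v)$). For $x,y\in V(D^+)$, $x\prec y$ means $x$ is an ancestor of $y$ in $D^+$ (there is a directed path of positive length from $x$ to $y$; a vertex is not its own ancestor), and $x\preceq y$ means $x\prec y$ or $x=y$. For $x\neq s$, a vertex $v$ is an $s$-dominator of $x$ if $v\neq x$ and every directed path from $s$ to $x$ in $D^+$ contains $v$; the $s$-immediate-dominator $I_s(x)$ is the $s$-dominator of $x$ such that every other $s$-dominator of $x$ is an $s$-dominator of $I_s(x)$ (the $s$-dominator closest to $x$). Symmetrically, for $x\neq t$, $v\neq x$ is a $t$-dominator of $x$ if every directed path from $x$ to $t$ in $D^+$ contains $v$, and $I_t(x)$ is the $t$-dominator of $x$ closest to $x$. *)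

(* Defs.v *)
From mathcomp Require Import all_boot all_order all_algebra.
Set Implicit Arguments. Unset Strict Implicit. Unset Printing Implicit Defensive.
Import Order.TTheory GRing.Theory Num.Theory.
Local Open Scope ring_scope.

(* A weighted graph: vertex set T (finite), adjacency e : rel T,
   edge lengths w : T -> T -> R (only meaningful on edges). *)

Definition wgraph (R : realFieldType) (T : finType) (e : rel T) (w : T -> T -> R) : Prop :=
  [/\ symmetric e, irreflexive e,
      (forall u v, e u v -> w u v = w v u),
      (forall u v, e u v -> 0 < w u v) &
      (forall u v, connect e u v)].

Fixpoint wlen (R : realFieldType) (T : finType) (w : T -> T -> R) (x : T) (p : seq T) : R :=
  match p with
  | [::] => 0
  | y :: p' => w x y + wlen w y p'
  end.

Definition is_dist (R : realFieldType) (T : finType) (e : rel T) (w : T -> T -> R)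
    (u v : T) (r : R) : Prop :=
  (exists2 p, path e u p & last u p = v /\ wlen w u p = r) /\
  (forall p, path e u p -> last u p = v -> r <= wlen w u p).

Definition shortest_st_path (R : realFieldType) (T : finType) (e : rel T) (w : T -> T -> R)
    (s t : T) (p : seq T) : Prop :=
  [/\ path e s p, uniq (s :: p), last s p = t & is_dist e w s t (wlen w s p)].

Definition D_edge (R : realFieldType) (T : finType) (e : rel T) (w : T -> T -> R)
    (s t u v : T) : Prop :=
  exists p, shortest_st_path e w s t p /\
    exists i : nat, (i < size p)%N /\
      ((nth s (s :: p) i = u /\ nth s (s :: p) i.+1 = v) \/
       (nth s (s :: p) i = v /\ nth s (s :: p) i.+1 = u)).

(* v is a vertex of D (= of D^+). *)
Definition D_vertex (R : realFieldType) (T : finType) (e : rel T) (w : T -> T -> R)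
    (s t v : T) : Prop :=
  exists2 p, shortest_st_path e w s t p & v \in s :: p.

Definition Dplus_arc (R : realFieldType) (T : finType) (e : rel T) (w : T -> T -> R)
    (s t u v : T) : Prop :=
  D_edge e w s t u v /\
  exists du dv, [/\ is_dist e w s u du, is_dist e w s v dv & dv = du + w u v].

Fixpoint dwalk (R : realFieldType) (T : finType) (e : rel T) (w : T -> T -> R)
    (s t : T) (x : T) (p : seq T) : Prop :=
  match p with
  | [::] => True
  | y :: p' => Dplus_arc e w s t x y /\ dwalk e w s t y p'
  end.

Definition anc (R : realFieldType) (T : finType) (e : rel T) (w : T -> T -> R)
    (s t x y : T) : Prop :=
  exists p, [/\ p != [::], dwalk e w s t x p & last x p = y].

Definition anceq (R : realFieldType) (T : finType) (e : rel T) (w : T -> T -> R)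
    (s t x y : T) : Prop :=
  anc e w s t x y \/ x = y.

Definition s_dom (R : realFieldType) (T : finType) (e : rel T) (w : T -> T -> R)
    (s t v x : T) : Prop :=
  v <> x /\ forall p, dwalk e w s t s p -> last s p = x -> v \in s :: p.

Definition t_dom (R : realFieldType) (T : finType) (e : rel T) (w : T -> T -> R)
    (s t v x : T) : Prop :=
  v <> x /\ forall p, dwalk e w s t x p -> last x p = t -> v \in x :: p.

Definition is_Is (R : realFieldType) (T : finType) (e : rel T) (w : T -> T -> R)
    (s t x v : T) : Prop :=
  s_dom e w s t v x /\ forall u, s_dom e w s t u x -> u <> v -> s_dom e w s t u v.

Definition is_It (R : realFieldType) (T : finType) (e : rel T) (w : T -> T -> R)
    (s t x v : T) : Prop :=
  t_dom e w s t v x /\ forall u, t_dom e w s t u x -> u <> v -> t_dom e w s t u v.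

(* Main.v *)
Require Import Defs.
From mathcomp Require Import all_boot all_order all_algebra.
Import Order.TTheory GRing.Theory Num.Theory.

Section H.
Variables (R : realFieldType) (T : finType) (e : rel T) (w : T -> T -> R) (s t : T).

Lemma wlen_cat (x : T) (p q : seq T) : wlen w x (p ++ q) = (wlen w x p + wlen w (last x p) q)%R.
Proof. elim: p x => [|y p IH] x /=; first by rewrite GRing.add0r. by rewrite IH GRing.addrA. Qed.

Lemma dwalk_cat (x : T) (p q : seq T) : dwalk e w s t x (p ++ q) <-> dwalk e w s t x p /\ dwalk e w s t (last x p) q.
Proof.
elim: p x => [|y p IH] x /=; first by tauto.
have := IH y; tauto.
Qed.

Lemma last_take (x : T) (p : seq T) k : k <= size p -> last x (take k p) = nth x (x :: p) k.
Proof.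
elim: p x k => [|y p IH] x [|k] //= Hk.
by rewrite IH // (set_nth_default y).
Qed.

Lemma dist_prefix (p : seq T) : path e s p -> last s p = t -> is_dist e w s t (wlen w s p) ->
  forall k, is_dist e w s (last s (take k p)) (wlen w s (take k p)).
Proof.
move=> Hp Hl [_ Hmin] k.
have Hab := cat_take_drop k p.
move: Hp; rewrite -{1}Hab cat_path => /andP[Ha Hb].
split; first by exists (take k p).
move=> q Hq Hql.
have Hqb : path e s (q ++ drop k p) by rewrite cat_path Hq Hql Hb.
have Hqbl : last s (q ++ drop k p) = t by rewrite last_cat Hql -last_cat Hab.
have := Hmin _ Hqb Hqbl.
rewrite -{1}Hab !wlen_cat Hql.
by rewrite lerD2r.
Qed.

Lemma dwalk_nth (x : T) (p : seq T) : (forall k, k < size p -> Dplus_arc e w s t (nth x (x :: p) k) (nth x (x :: p) k.+1)) ->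
  dwalk e w s t x p.
Proof.
elim: p x => [|y p IH] x //= H.
split; first exact: (H 0).
apply: IH => k Hk.
have := H k.+1 Hk.
rewrite /= !(set_nth_default x y) //; by rewrite /= ltnS // ltnW.
Qed.

Lemma shortest_dwalk (p : seq T) : shortest_st_path e w s t p -> dwalk e w s t s p.
Proof.
move=> Hs; case: (Hs) => Hp _ Hl Hd.
apply: dwalk_nth => k Hk.
split.
  exists p; split; first exact: Hs.
  exists k; split; first exact: Hk.
  by left.
exists (wlen w s (take k p)), (wlen w s (take k.+1 p)).
have D1 := dist_prefix p Hp Hl Hd k.
rewrite last_take in D1; last exact: ltnW.
have D2 := dist_prefix p Hp Hl Hd k.+1.
rewrite last_take in D2; last exact: Hk.
split; [exact: D1 | exact: D2 |].
rewrite (take_nth s Hk) -cats1 wlen_cat last_take; last exact: ltnW.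
rewrite /= GRing.addr0.
by [].
Qed.

Lemma vertex_walks (v : T) : D_vertex e w s t v ->
  (exists p, dwalk e w s t s p /\ last s p = v) /\
  (exists q, dwalk e w s t v q /\ last v q = t).
Proof.
case=> p Hs Hv.
have Hw := shortest_dwalk p Hs.
case: Hs => _ _ Hl _.
set k := index v (s :: p).
have Hk : index v (s :: p) <= size p.
  by rewrite -ltnS -[(size p).+1]/(size (s :: p)) index_mem.
have Hlast : last s (take (index v (s :: p)) p) = v.
  by rewrite last_take // nth_index.
move: Hw; rewrite -(cat_take_drop (index v (s :: p)) p) => /dwalk_cat [H1 H2].
split; first by exists (take (index v (s :: p)) p).
exists (drop k p); rewrite -Hlast; split => //.
by rewrite -last_cat cat_take_drop.
Qed.

Lemma mem_suffix (x z : T) (p : seq T) : dwalk e w s t x p -> z \in x :: p ->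
  anceq e w s t z (last x p).
Proof.
elim: p x => [|y p IH] x /=.
  by rewrite inE => _ /eqP ->; right.
move=> [Ha Hw]; rewrite inE => /orP[/eqP ->|Hz].
  by left; exists (y :: p).
exact: IH.
Qed.

Lemma mem_prefix (x z : T) (p : seq T) : dwalk e w s t x p -> z \in p ->
  anc e w s t x z.
Proof.
elim: p x => [|y p IH] x //=.
move=> [Ha Hw]; rewrite inE => /orP[/eqP ->|Hz].
  by exists [:: y].
have [q [Hq Hwq Hlq]] := IH y Hw Hz.
by exists (y :: q).
Qed.

End H.

Theorem lemma2 (R : realFieldType) (T : finType) (e : rel T) (w : T -> T -> R) (s t : T)
  (hG : wgraph e w) (x y : T)
  (hx : D_vertex e w s t x) (hy : D_vertex e w s t y)
  (hyx : anc e w s t y x) :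
  (forall i, is_Is e w s t x i -> anceq e w s t i y \/ anc e w s t y i) /\
  (forall j, is_It e w s t y j -> anceq e w s t j x \/ anc e w s t x j).
Proof.
have [Q [_ HQ HQl]] := hyx.
split.
  move=> i [[_ Hi] _].
  have [[P [HP HPl]] _] := @vertex_walks R T e w s t y hy.
  have Hc : dwalk e w s t s (P ++ Q) by apply/(@dwalk_cat R T e w s t); rewrite HPl.
  have := Hi _ Hc; rewrite last_cat HPl HQl => /(_ erefl).
  rewrite -cat_cons mem_cat => /orP[H|H].
    by left; rewrite -HPl; exact: (@mem_suffix R T e w s t) HP H.
  by right; exact: (@mem_prefix R T e w s t) HQ H.
move=> j [[_ Hj] _].
have [_ [P [HP HPl]]] := @vertex_walks R T e w s t x hx.
have Hc : dwalk e w s t y (Q ++ P) by apply/(@dwalk_cat R T e w s t); rewrite HQl.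
have := Hj _ Hc; rewrite last_cat HQl HPl => /(_ erefl).
rewrite -cat_cons mem_cat => /orP[H|H].
  by left; rewrite -HQl; exact: (@mem_suffix R T e w s t) HQ H.
by right; exact: (@mem_prefix R T e w s t) HP H.
Qed.
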